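(* Let $G$ be a non-abelian subgroup of $\mathcal{H}(n,\mathbb{C})$ with $\Lambda_G\not\subset\mathbb{R}$ and $G\not\subset\mathcal{SR}_n$. Then $G$ has no discrete orbit, i.e. for every $z\in\mathbb{C}^n$ the orbit $G(z)$ is not a discrete subset of $\mathbb{C}^n$.
   Context: $\mathcal{H}(n,\mathbb{C})$ is the group of all maps $z\mapsto\lambda z+b$ of $\mathbb{C}^n$ with $\lambda\in\mathbb{C}^*$, $b\in\mathbb{C}^n$ ($\lambda$ = ratio). $H_2=(\frac{\pi}{2}+\pi\mathbb{Z})\cup\pi\mathbb{Z}$, $F_2=\{e^{ix}:x\in H_2\}$, $H_3=(\frac{\pi}{3}+\pi\mathbb{Z})\cup(-\frac{\pi}{3}+\pi\mathbb{Z})\cup\pi\mathbb{Z}$, $F_3=\{e^{ix}:x\in H_3\}$; $\mathcal{S}_i\mathcal{R}_n=\{z\mapsto\lambda z+b:\lambda\in F_i, b\in\mathbb{C}^n\}$, $\mathcal{SR}_n=\mathcal{S}_2\mathcal{R}_n\cup\mathcal{S}_3\mathcal{R}_n$. $\Lambda_G$ is the set of ratios of elements of $G$, and $G(z)=\{f(z):f\in G\}$. *)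

(* Defs.v *)
From Stdlib Require Import Reals ZArith.
From Stdlib Require Fin.
Open Scope R_scope.

(* Complex numbers C = R x R : (real part, imaginary part). *)
Definition C : Type := (R * R)%type.
Definition C0 : C := (0, 0).
Definition C1 : C := (1, 0).
Definition Cadd (u v : C) : C := (fst u + fst v, snd u + snd v).
Definition Csub (u v : C) : C := (fst u - fst v, snd u - snd v).
Definition Cmul (u v : C) : C :=
  (fst u * fst v - snd u * snd v, fst u * snd v + snd u * fst v).
Definition Cnorm (u : C) : R := sqrt (fst u ^ 2 + snd u ^ 2).
Definition Cexpi (x : R) : C := (cos x, sin x).

Definition Cn (n : nat) : Type := Fin.t n -> C.

(* The map z |-> lambda z + b of C^n, encoded by the pair (lambda, b). *)
Record aff (n : nat) : Type := Aff { ratio : C; trans : Cn n }.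
Arguments Aff {n} _ _.
Arguments ratio {n} _.
Arguments trans {n} _.

Definition act {n} (g : aff n) (z : Cn n) : Cn n :=
  fun i => Cadd (Cmul (ratio g) (z i)) (trans g i).

Definition comp {n} (g h : aff n) : aff n :=
  Aff (Cmul (ratio g) (ratio h))
      (fun i => Cadd (Cmul (ratio g) (trans h i)) (trans g i)).

Definition id_aff (n : nat) : aff n := Aff C1 (fun _ => C0).

Definition in_Hn {n} (g : aff n) : Prop := ratio g <> C0.

Definition is_subgroup_H {n} (G : aff n -> Prop) : Prop :=
  (forall g, G g -> in_Hn g) /\
  G (id_aff n) /\
  (forall g h, G g -> G h -> G (comp g h)) /\
  (forall g, G g -> exists h, G h /\ forall z i, act h (act g z) i = z i).

Definition non_abelian {n} (G : aff n -> Prop) : Prop :=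
  exists g h, G g /\ G h /\ exists z i, act g (act h z) i <> act h (act g z) i.

Definition Lambda {n} (G : aff n -> Prop) (c : C) : Prop :=
  exists g, G g /\ ratio g = c.

Definition is_real (c : C) : Prop := snd c = 0.

Definition H2 (x : R) : Prop :=
  exists k : Z, x = PI / 2 + IZR k * PI \/ x = IZR k * PI.
Definition H3 (x : R) : Prop :=
  exists k : Z, x = PI / 3 + IZR k * PI \/ x = - (PI / 3) + IZR k * PI
                \/ x = IZR k * PI.
Definition F2 (c : C) : Prop := exists x, H2 x /\ c = Cexpi x.
Definition F3 (c : C) : Prop := exists x, H3 x /\ c = Cexpi x.

Definition in_S2Rn {n} (g : aff n) : Prop := F2 (ratio g).
Definition in_S3Rn {n} (g : aff n) : Prop := F3 (ratio g).
Definition in_SRn {n} (g : aff n) : Prop := in_S2Rn g \/ in_S3Rn g.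

Definition orbit {n} (G : aff n -> Prop) (z : Cn n) (w : Cn n) : Prop :=
  exists g, G g /\ forall i, w i = act g z i.

Definition discrete {n} (D : Cn n -> Prop) : Prop :=
  forall x, D x -> exists eps, 0 < eps /\
    forall y, D y -> (forall i, Cnorm (Csub (y i) (x i)) < eps) ->
      forall i, y i = x i.

(* Main.v *)
From Pilot Require Import Defs.
From Stdlib Require Import Reals ZArith Lra Lia Psatz Classical.
From Stdlib Require Fin.
Import Pilot.Defs.
Open Scope R_scope.

Definition Copp (u : Defs.C) : Defs.C := (- fst u, - snd u).

Ltac cdes := repeat match goal with u : Defs.C |- _ => destruct u end.
Lemma Cext (u v : Defs.C) : fst u = fst v -> snd u = snd v -> u = v.
Proof. destruct u, v; simpl; intros -> ->; auto. Qed.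
Ltac cring := unfold Cmul, Cadd, Csub, Copp, C1, C0; apply Cext; simpl; ring.

Lemma Ceq_fst (u v : Defs.C) : u = v -> fst u = fst v. Proof. intros ->; auto. Qed.
Lemma Ceq_snd (u v : Defs.C) : u = v -> snd u = snd v. Proof. intros ->; auto. Qed.

Lemma Cnorm_mul a b : Cnorm (Cmul a b) = Cnorm a * Cnorm b.
Proof.
  destruct a as [a1 a2], b as [b1 b2]; unfold Cnorm, Cmul; simpl.
  rewrite <- sqrt_mult by nra. f_equal. ring.
Qed.

Lemma Cnorm_nonneg a : 0 <= Cnorm a.
Proof. apply sqrt_pos. Qed.

Lemma Cnorm_pos a : a <> C0 -> 0 < Cnorm a.
Proof.
  destruct a as [a1 a2]; intro H; unfold Cnorm; simpl. apply sqrt_lt_R0.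
  destruct (Req_dec a1 0); destruct (Req_dec a2 0); subst; try nra.
  exfalso; apply H; reflexivity.
Qed.

Lemma Cnorm_real f : Cnorm (f, 0) = Rabs f.
Proof. unfold Cnorm; simpl. rewrite <- sqrt_Rsqr_abs. f_equal. unfold Rsqr; ring. Qed.

Lemma Cnorm_C1 : Cnorm C1 = 1.
Proof. unfold Cnorm, C1; cbv [fst snd]. replace (1^2+0^2) with 1 by ring. apply sqrt_1. Qed.

Lemma Cmul_neq0 a b : a <> C0 -> b <> C0 -> Cmul a b <> C0.
Proof.
  intros Ha Hb H. assert (Cnorm (Cmul a b) = 0).
  { rewrite H. unfold Cnorm, C0; cbv [fst snd]. replace (0^2+0^2) with 0 by ring. apply sqrt_0. }
  rewrite Cnorm_mul in H0. pose proof (Cnorm_pos a Ha). pose proof (Cnorm_pos b Hb). nra.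
Qed.

Fixpoint Cpow (w : Defs.C) (k : nat) : Defs.C := match k with O => C1 | S k => Cmul w (Cpow w k) end.

Lemma Cnorm_pow w k : Cnorm (Cpow w k) = Cnorm w ^ k.
Proof. induction k; simpl. apply Cnorm_C1. rewrite Cnorm_mul, IHk; auto. Qed.

Lemma Cpow_neq0 w k : w <> C0 -> Cpow w k <> C0.
Proof.
  intro H; induction k; simpl. unfold C1, C0; intro E; injection E; lra.
  apply Cmul_neq0; auto.
Qed.

Lemma small (P : Defs.C -> Prop) (w : Defs.C) : P C1 -> (forall a, P a -> P (Cmul w a)) ->
  w <> C0 -> Cnorm w < 1 -> forall d, 0 < d -> exists a, P a /\ a <> C0 /\ Cnorm a < d.
Proof.
  intros H1 Hm Hw Hn d Hd.
  assert (Hp : forall k, P (Cpow w k)) by (induction k; simpl; auto).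
  destruct (pow_lt_1_zero (Cnorm w)) with (y := d) as [N HN]; auto.
  { rewrite Rabs_right; auto. apply Rle_ge, Cnorm_nonneg. }
  exists (Cpow w N). split; [auto|split]. apply Cpow_neq0; auto.
  specialize (HN N (le_n _)). rewrite Rabs_right in HN.
  rewrite Cnorm_pow; auto. apply Rle_ge, pow_le, Cnorm_nonneg.
Qed.

Lemma bound_fin n (f : Fin.t n -> R) : exists K, 0 <= K /\ forall i, f i <= K.
Proof.
  induction n.
  - exists 0. split. lra. intro i. inversion i.
  - destruct (IHn (fun i => f (Fin.FS i))) as [K [HK HK']].
    exists (Rmax K (f Fin.F1)). split. apply Rle_trans with K; auto; apply Rmax_l.
    intro i. apply (Fin.caseS' i (fun i => f i <= Rmax K (f Fin.F1))).
    apply Rmax_r. intro p. apply Rle_trans with K; auto; apply Rmax_l.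
Qed.

Lemma cexpi_eq x a b : cos x = a -> sin x = b -> (a, b) = Cexpi x.
Proof. intros; unfold Cexpi; subst; auto. Qed.

Lemma F_cases x y : (x = 1 /\ y = 0) \/ (x = -1 /\ y = 0) \/ (x = 0 /\ y = 1) \/ (x = 0 /\ y = -1)
  \/ (x = 1/2 /\ y = sqrt 3 / 2) \/ (x = 1/2 /\ y = - (sqrt 3 / 2))
  \/ (x = -1/2 /\ y = sqrt 3 / 2) \/ (x = -1/2 /\ y = - (sqrt 3 / 2)) -> F2 (x, y) \/ F3 (x, y).
Proof.
  intros [[-> ->]|[[-> ->]|[[-> ->]|[[-> ->]|[[-> ->]|[[-> ->]|[[-> ->]|[-> ->]]]]]]]].
  - left. exists 0. split. exists 0%Z. right. simpl; ring. apply cexpi_eq. apply cos_0. apply sin_0.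
  - left. exists PI. split. exists 1%Z. right. simpl; ring. apply cexpi_eq. apply cos_PI. apply sin_PI.
  - left. exists (PI/2). split. exists 0%Z. left. simpl; ring. apply cexpi_eq. apply cos_PI2. apply sin_PI2.
  - left. exists (PI/2 + PI). split. exists 1%Z. left. simpl; ring. apply cexpi_eq.
    rewrite neg_cos, cos_PI2; ring. rewrite neg_sin, sin_PI2; ring.
  - right. exists (PI/3). split. exists 0%Z. left. simpl; ring. apply cexpi_eq. apply cos_PI3. apply sin_PI3.
  - right. exists (-(PI/3)). split. exists 0%Z. right; left. simpl; ring. apply cexpi_eq.
    rewrite cos_neg; apply cos_PI3. rewrite sin_neg, sin_PI3; auto.
  - right. exists (-(PI/3) + PI). split. exists 1%Z. right; left. simpl; ring. apply cexpi_eq.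
    rewrite neg_cos, cos_neg, cos_PI3; field. rewrite neg_sin, sin_neg, sin_PI3; ring.
  - right. exists (PI/3 + PI). split. exists 1%Z. left. simpl; ring. apply cexpi_eq.
    rewrite neg_cos, cos_PI3; field. rewrite neg_sin, sin_PI3; ring.
Qed.

Lemma int_closure (P : Defs.C -> Prop) : P C1 -> (forall a b, P a -> P b -> P (Cadd a b)) ->
  (forall a, P a -> P (Copp a)) -> forall m a, P a -> P (Cmul (IZR m, 0) a).
Proof.
  intros H1 Ha Ho.
  assert (H0 : P C0). { replace C0 with (Cadd C1 (Copp C1)) by cring. auto. }
  assert (Hn : forall k a, P a -> P (Cmul (INR k, 0) a)).
  { induction k; intros a Pa.
    - replace (Cmul (INR 0, 0) a) with C0 by (simpl; cring). auto.
    - replace (Cmul (INR (S k), 0) a) with (Cadd (Cmul (INR k, 0) a) a) by (rewrite S_INR; cring).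
      auto. }
  intros m a Pa. destruct m as [|p|p].
  - replace (Cmul (IZR 0, 0) a) with C0 by (simpl; cring). auto.
  - rewrite <- positive_nat_Z, <- INR_IZR_INZ. auto.
  - change (IZR (Z.neg p)) with (- IZR (Z.pos p)).
    rewrite <- positive_nat_Z, <- INR_IZR_INZ.
    replace (Cmul (- INR (Pos.to_nat p), 0) a) with (Copp (Cmul (INR (Pos.to_nat p), 0) a)) by cring.
    auto.
Qed.

Lemma exists_small (P : Defs.C -> Prop) (mu nu : Defs.C) :
  P C1 -> (forall a b, P a -> P b -> P (Cadd a b)) -> (forall a, P a -> P (Copp a)) ->
  (forall a, P a -> P (Cmul mu a)) -> (forall a, P a -> P (Cmul nu a)) ->
  Cmul nu mu = C1 -> ~ (F2 mu \/ F3 mu) ->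
  forall d, 0 < d -> exists a, P a /\ a <> C0 /\ Cnorm a < d.
Proof.
  intros H1 Ha Ho Hmu Hnu Hinv HF d Hd.
  assert (Hmu0 : mu <> C0).
  { intro E; subst. revert Hinv; unfold Cmul, C0, C1; simpl; intro E; injection E; lra. }
  assert (Hnu0 : nu <> C0).
  { intro E; subst. revert Hinv; unfold Cmul, C0, C1; simpl; intro E; injection E; lra. }
  assert (Hprod : Cnorm nu * Cnorm mu = 1) by (rewrite <- Cnorm_mul, Hinv; apply Cnorm_C1).
  destruct (total_order_T (Cnorm mu) 1) as [[Hlt|Heq]|Hgt].
  - apply (small P mu); auto.
  - destruct mu as [x y], nu as [p q].
    assert (Hxy : x^2 + y^2 = 1).
    { unfold Cnorm in Heq; cbv [fst snd] in Heq. rewrite <- (sqrt_sqrt (x^2+y^2)) by nra. rewrite Heq; ring. }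
    pose proof (Ceq_fst _ _ Hinv) as E1; pose proof (Ceq_snd _ _ Hinv) as E2; cbv [Cmul C1 fst snd] in E1, E2.
    assert (Hp : p = x).
    { transitivity (x*(p*x-q*y) + y*(p*y+q*x)).
      - replace (x*(p*x-q*y) + y*(p*y+q*x)) with (p*(x^2+y^2)) by ring. rewrite Hxy; ring.
      - rewrite E1, E2; ring. }
    assert (Hq : q = - y).
    { transitivity (x*(p*y+q*x) - y*(p*x-q*y)).
      - replace (x*(p*y+q*x) - y*(p*x-q*y)) with (q*(x^2+y^2)) by ring. rewrite Hxy; ring.
      - rewrite E1, E2; ring. }
    subst p q.
    assert (Hc : forall a, P a -> P (Cmul (2*x, 0) a)).
    { intros a Pa. replace (Cmul (2*x,0) a) with (Cadd (Cmul (x,y) a) (Cmul (x,-y) a)) by cring. auto. }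
    pose proof (int_closure P H1 Ha Ho) as HZ.
    set (m := Int_part (2*x)). set (f := 2*x - IZR m).
    assert (Hf : forall a, P a -> P (Cmul (f, 0) a)).
    { intros a Pa. replace (Cmul (f,0) a) with (Cadd (Cmul (2*x,0) a) (Copp (Cmul (IZR m,0) a)))
        by (unfold f; cring). auto. }
    destruct (base_Int_part (2*x)) as [B1 B2]. fold m in B1, B2.
    destruct (Req_dec f 0) as [Hf0|Hf0].
    + exfalso. apply HF. apply F_cases.
      assert (Hx : x = IZR m / 2) by (unfold f in Hf0; lra).
      assert (-2 <= IZR m <= 2) by nra.
      destruct H as [L U]. apply le_IZR in L. apply le_IZR in U.
      assert (Hs : sqrt 3 * sqrt 3 = 3) by (apply sqrt_sqrt; lra).
      assert (m = -2 \/ m = -1 \/ m = 0 \/ m = 1 \/ m = 2)%Z as Hm by lia.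
      destruct Hm as [Hm|[Hm|[Hm|[Hm|Hm]]]]; rewrite Hm in Hx; simpl in Hx.
      * right; left. split. lra. nra.
      * assert (Hy : (y - sqrt 3/2) * (y + sqrt 3/2) = 0) by nra.
        apply Rmult_integral in Hy. do 6 right. destruct Hy; [left|right]; split; lra.
      * assert (Hy : (y - 1) * (y + 1) = 0) by nra.
        apply Rmult_integral in Hy. do 2 right. destruct Hy; [left|right;left]; split; lra.
      * assert (Hy : (y - sqrt 3/2) * (y + sqrt 3/2) = 0) by nra.
        apply Rmult_integral in Hy. do 4 right. destruct Hy; [left|right;left]; split; lra.
      * left. split. lra. nra.
    + apply (small P (f, 0)); auto.
      * intro E; injection E; auto.
      * rewrite Cnorm_real. rewrite Rabs_right; unfold f in *; lra.
  - apply (small P nu); auto. nra.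
Qed.

Lemma act_comp3 {n} (a b c d : aff n) u i :
  act (comp a (comp b (comp c d))) u i = act a (act b (act c (act d u))) i.
Proof. unfold act, comp; simpl. cring. Qed.

Lemma act_ext {n} (g : aff n) u u' : (forall i, u i = u' i) -> forall i, act g u i = act g u' i.
Proof. intros H i; unfold act; rewrite H; auto. Qed.

Lemma inv_facts {n} (i0 : Fin.t n) (g h : aff n) :
  (forall z i, act h (act g z) i = z i) ->
  Cmul (ratio h) (ratio g) = C1 /\ forall i, trans h i = Copp (Cmul (ratio h) (trans g i)).
Proof.
  intro H.
  assert (H0 : forall i, Cadd (Cmul (ratio h) (trans g i)) (trans h i) = C0).
  { intro i. rewrite <- (H (fun _ => C0) i). unfold act. cring. }
  split.
  - pose proof (H (fun _ => C1) i0) as E. unfold act in E.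
    pose proof (H0 i0) as E0.
    transitivity (Csub (Cadd (Cmul (ratio h) (Cadd (Cmul (ratio g) C1) (trans g i0))) (trans h i0))
                       (Cadd (Cmul (ratio h) (trans g i0)) (trans h i0))).
    + cring.
    + rewrite E, E0. cring.
  - intro i. pose proof (H0 i) as E0.
    transitivity (Csub (Cadd (Cmul (ratio h) (trans g i)) (trans h i)) (Cmul (ratio h) (trans g i))).
    + cring.
    + rewrite E0. cring.
Qed.

Theorem corollary1p3 (n : nat) (G : aff n -> Prop) :
  is_subgroup_H G ->
  non_abelian G ->
  (exists c, Lambda G c /\ ~ is_real c) ->
  (exists g, G g /\ ~ in_SRn g) ->
  forall z : Cn n, ~ discrete (orbit G z).
Proof.
  intros [HH [Hid [Hcomp Hinvex]]] [g [h [Gg [Gh [z0 [i0 Hne]]]]]] _ [g0 [Gg0 Hg0]] z Hdisc.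
  destruct (Hinvex g Gg) as [g' [Gg' Hg']].
  destruct (Hinvex h Gh) as [h' [Gh' Hh']].
  destruct (inv_facts i0 g g' Hg') as [Rg Tg].
  destruct (inv_facts i0 h h' Hh') as [Rh Th].
  set (t := comp g (comp h (comp g' h'))).
  assert (Gt : G t) by (unfold t; auto).
  assert (Rt : ratio t = C1).
  { unfold t; cbn [ratio trans comp]. transitivity (Cmul (Cmul (ratio g') (ratio g)) (Cmul (ratio h') (ratio h))).
    cring. rewrite Rg, Rh. cring. }
  assert (Hv : exists i1, trans t i1 <> C0).
  { apply not_all_not_ex. intro H0. apply Hne.
    assert (Ht : forall u i, act t u i = u i).
    { intros u i. unfold act. rewrite Rt. rewrite (NNPP _ (H0 i)). cring. }
    set (w := act h (act g z0)).
    assert (E1 : forall j, act h' w j = act g z0 j) by (intro j; apply Hh').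
    assert (E2 : forall j, act g' (act h' w) j = z0 j).
    { intro j. rewrite (act_ext g' _ _ E1 j). apply Hg'. }
    assert (E3 : forall j, act h (act g' (act h' w)) j = act h z0 j) by (apply act_ext; auto).
    rewrite <- (act_ext g _ _ E3 i0). rewrite <- act_comp3. fold t. apply Ht. }
  destruct Hv as [i1 Hv1].
  set (v := trans t).
  set (M := fun a => exists s, G s /\ ratio s = C1 /\ forall i, trans s i = Cmul a (v i)).
  assert (M1 : M C1).
  { exists t. split; [auto|split; auto]. intro i. unfold v. cring. }
  assert (Madd : forall a b, M a -> M b -> M (Cadd a b)).
  { intros a b [s1 [G1 [R1 T1]]] [s2 [G2 [R2 T2]]]. exists (comp s1 s2). split; auto.
    cbn [ratio trans comp]. rewrite R1, R2. split. cring. intro i. rewrite T1, T2. cring. }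
  assert (Mopp : forall a, M a -> M (Copp a)).
  { intros a [s [Gs [Rs Ts]]]. destruct (Hinvex s Gs) as [s' [Gs' Hs']].
    destruct (inv_facts i0 s s' Hs') as [Rs' Ts'].
    assert (Rs'' : ratio s' = C1).
    { transitivity (Cmul (ratio s') (ratio s)). rewrite Rs; cring. auto. }
    exists s'. split; auto. split; auto. intro i. rewrite Ts', Rs'', Ts. cring. }
  destruct (Hinvex g0 Gg0) as [h0 [Gh0 Hh0]].
  destruct (inv_facts i0 g0 h0 Hh0) as [R0 T0].
  assert (Mmu : forall a, M a -> M (Cmul (ratio g0) a)).
  { intros a [s [Gs [Rs Ts]]]. exists (comp g0 (comp s h0)). split; auto. cbn [ratio trans comp]. split.
    - rewrite Rs. transitivity (Cmul (ratio h0) (ratio g0)). cring. auto.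
    - intro i. rewrite Rs, Ts, T0.
      transitivity (Cadd (Cmul (Csub C1 (Cmul (ratio h0) (ratio g0))) (trans g0 i))
                         (Cmul (Cmul (ratio g0) a) (v i))).
      cring. rewrite R0. cring. }
  assert (Mnu : forall a, M a -> M (Cmul (ratio h0) a)).
  { intros a [s [Gs [Rs Ts]]]. exists (comp h0 (comp s g0)). split; auto. cbn [ratio trans comp]. split.
    - rewrite Rs. transitivity (Cmul (ratio h0) (ratio g0)). cring. auto.
    - intro i. rewrite Rs, Ts, T0. cring. }
  destruct (Hdisc z) as [eps [Heps Hd]].
  { exists (id_aff n). split; auto. intro i. unfold act, id_aff; simpl. cring. }
  destruct (bound_fin n (fun i => Cnorm (v i))) as [K [HK HKb]].
  destruct (exists_small M (ratio g0) (ratio h0) M1 Madd Mopp Mmu Mnu R0) with (d := eps / (K+1))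
    as [a [[s [Gs [Rs Ts]]] [Ha0 Ha]]].
  { intro HF. apply Hg0. exact HF. }
  { apply Rdiv_lt_0_compat; lra. }
  assert (Hy : forall i, Csub (act s z i) (z i) = Cmul a (v i)).
  { intro i. unfold act. rewrite Rs, Ts. cring. }
  assert (Hv1' : v i1 <> C0) by exact Hv1.
  apply (Cmul_neq0 a (v i1) Ha0 Hv1'). rewrite <- Hy.
  rewrite (Hd (act s z)).
  - cring.
  - exists s. split; auto.
  - intro i. rewrite Hy, Cnorm_mul.
    pose proof (Cnorm_pos a Ha0). pose proof (HKb i). simpl in H0.
    apply Rlt_le_trans with (Cnorm a * (K+1)). apply Rmult_lt_compat_l; lra.
    apply Rlt_le in Ha. apply Rmult_le_compat_r with (r := K+1) in Ha; [|lra].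
    unfold Rdiv in Ha. rewrite Rmult_assoc, Rinv_l in Ha; lra.
Qed.
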